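(* Let $S$ be a monoid, $n\in\mathbb N$, and let $A$ be an $n$-absolutely pure $S$-act which is a subact of an $S$-act $B$. Let $\theta:B\to A$ be an $S$-morphism and let $\Sigma=\Sigma(x_1,\dots,x_m)$ be a finite consistent set of equations over $B$ with $m\le n$. Then there is an $S$-morphism $B(\Sigma)\to A$ extending $\theta$ (with $B$ identified with its image in $B(\Sigma)$), and if $\theta$ is a retraction (i.e. $a\theta=a$ for all $a\in A$) then this $S$-morphism is also a retraction onto $A$.
   Context: A (right) $S$-act is a set with an action $(a,s)\mapsto as$ with $a1=a$, $a(st)=(as)t$. Equations over an $S$-act $C$ with variables from $X$ have the forms $xs=yt$, $xs=xt$, $xs=c$ ($x,y\in X$, $s,t\in S$, $c\in C$); a solution in $D\supseteq C$ is a family in $D$ satisfying them; a set of equations is consistent if it has a solution in some $S$-act containing $C$. $A$ is $n$-absolutely pure if every finite consistent set of equations over $A$ in at most $n$ variables has a solution in $A$. For a set $\Sigma$ of equations over $B$: $H(\Sigma)=\{(xu,yv):xu=yv\in\Sigma\}$, $K(\Sigma)=\{(xs,c):xs=c\in\Sigma\}$, $\kappa_\Sigma$ is the congruence on $B\sqcup F_S(X)$ ($F_S(X)$ the free $S$-act) generated by $H(\Sigma)\cup K(\Sigma)$, and $B(\Sigma)=(B\sqcup F_S(X))/\kappa_\Sigma$, into which $B$ embeds via $b\mapsto[b]$ when $\Sigma$ is consistent. *)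

(* Defs.v *)
From Stdlib Require Import List FunctionalExtensionality PropExtensionality ProofIrrelevance.
Set Implicit Arguments.

Record monoid := Monoid {
  mcar :> Type;
  mmul : mcar -> mcar -> mcar;
  mone : mcar;
  mmulA : forall a b c, mmul a (mmul b c) = mmul (mmul a b) c;
  mmul1l : forall a, mmul mone a = a;
  mmul1r : forall a, mmul a mone = a }.

Record act (S : monoid) := Act {
  acar :> Type;
  aact : acar -> S -> acar;
  aact1 : forall a, aact a (mone S) = a;
  aactM : forall a s t, aact a (mmul S s t) = aact (aact a s) t }.
Arguments aact {S _} _ _.

Section Acts.
Variable S : monoid.

Definition is_morph (C D : act S) (f : C -> D) : Prop :=
  forall a s, f (aact a s) = aact (f a) s.

Definition closed_sub (B : act S) (P : B -> Prop) :=
  forall b s, P b -> P (aact b s).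

Arguments closed_sub {B} P.
Arguments is_morph {C D} f.
Section Sub.
Variables (B : act S) (P : B -> Prop) (HP : closed_sub P).
Definition sub_aact (a : {b : B | P b}) (s : S) : {b : B | P b} :=
  exist _ (aact (proj1_sig a) s) (HP s (proj2_sig a)).
Lemma sub_aact1 a : sub_aact a (mone S) = a.
Proof. destruct a as [b pb]; unfold sub_aact; simpl.
  apply eq_sig_hprop; [intros; apply proof_irrelevance| apply aact1]. Qed.
Lemma sub_aactM a s t : sub_aact a (mmul S s t) = sub_aact (sub_aact a s) t.
Proof. destruct a as [b pb]; unfold sub_aact; simpl.
  apply eq_sig_hprop; [intros; apply proof_irrelevance| apply aactM]. Qed.
Definition sub_act : act S := @Act S _ sub_aact sub_aact1 sub_aactM.
End Sub.

(** Equations over C with variables from X: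
    EqVV x s y t  is  xs = yt  (with x = y allowed, giving xs = xt),
    EqVC x s c    is  xs = c. *)
Inductive equation (C : act S) (X : Type) :=
| EqVV : X -> S -> X -> S -> equation C X
| EqVC : X -> S -> C -> equation C X.
Arguments EqVV {C X}. Arguments EqVC {C X}.

Definition solves (C D : act S) (iota : C -> D) (X : Type)
  (Sigma : list (equation C X)) (sol : X -> D) : Prop :=
  forall e, In e Sigma ->
    match e with
    | EqVV x s y t => aact (sol x) s = aact (sol y) t
    | EqVC x s c => aact (sol x) s = iota c
    end.

Arguments solves {C D} iota {X} Sigma sol.

Definition consistent (C : act S) (X : Type) (Sigma : list (equation C X)) : Prop :=
  exists (D : act S) (iota : C -> D),
    is_morph iota /\ (forall a b, iota a = iota b -> a = b) /\
    exists sol : X -> D, solves iota Sigma sol.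

Arguments consistent {C X} Sigma.

Definition var (m : nat) := {k : nat | k < m}.

Definition n_abs_pure (n : nat) (A : act S) : Prop :=
  forall m, m <= n -> forall Sigma : list (equation A (var m)),
    consistent Sigma -> exists sol : var m -> A, solves (fun a => a) Sigma sol.

(** B ⊔ F_S(X), with F_S(X) = X × S the free act on X *)
Section BSigma.
Variables (B : act S) (X : Type) (Sigma : list (equation B X)).

Definition U := (B + (X * S))%type.
Definition uact (w : U) (s : S) : U :=
  match w with
  | inl b => inl (aact b s)
  | inr (x, u) => inr (x, mmul S u s)
  end.

Definition HK (p q : U) : Prop :=
  (exists x u y v, In (EqVV x u y v) Sigma /\ p = inr (x, u) /\ q = inr (y, v)) \/
  (exists x s c, In (EqVC x s c) Sigma /\ p = inr (x, s) /\ q = inl c).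

Inductive kappa : U -> U -> Prop :=
| kgen p q : HK p q -> kappa p q
| krefl p : kappa p p
| ksym p q : kappa p q -> kappa q p
| ktrans p q r : kappa p q -> kappa q r -> kappa p r
| kact p q s : kappa p q -> kappa (uact p s) (uact q s).

(** B(Sigma) = (B ⊔ F_S(X)) / kappa_Sigma, classes as predicates *)
Definition Qcar := {P : U -> Prop | exists u, P = kappa u}.

Definition cls (u : U) : Qcar := exist _ (kappa u) (ex_intro _ u eq_refl).

Lemma qact_ok (q : Qcar) (s : S) :
  exists u, (fun w => exists v, proj1_sig q v /\ kappa (uact v s) w) = kappa u.
Proof.
  destruct q as [P [u0 ->]]; simpl. exists (uact u0 s).
  apply functional_extensionality; intro w; apply propositional_extensionality.
  split.
  - intros [v [H1 H2]]. eapply ktrans; [apply kact; exact H1| exact H2].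
  - intro H. exists u0. split; [apply krefl| exact H].
Qed.

Definition qact (q : Qcar) (s : S) : Qcar := exist _ _ (qact_ok q s).

Lemma qact_cls u s : qact (cls u) s = cls (uact u s).
Proof.
  apply eq_sig_hprop; [intros; apply proof_irrelevance|]. simpl.
  apply functional_extensionality; intro w; apply propositional_extensionality.
  split.
  - intros [v [H1 H2]]. eapply ktrans; [apply kact; exact H1| exact H2].
  - intro H. exists u. split; [apply krefl| exact H].
Qed.

Lemma uact1 u : uact u (mone S) = u.
Proof. destruct u as [b|[x v]]; simpl; [rewrite aact1|rewrite mmul1r]; reflexivity. Qed.
Lemma uactM u s t : uact u (mmul S s t) = uact (uact u s) t.
Proof. destruct u as [b|[x v]]; simpl; [rewrite aactM|rewrite mmulA]; reflexivity. Qed.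

Lemma qact1 q : qact q (mone S) = q.
Proof.
  destruct q as [P [u ->]] eqn:E.
  change (qact (cls u) (mone S) = cls u) in |- *.
  rewrite qact_cls, uact1; reflexivity.
Qed.

Lemma qactM q s t : qact q (mmul S s t) = qact (qact q s) t.
Proof.
  destruct q as [P [u ->]] eqn:E.
  change (qact (cls u) (mmul S s t) = qact (qact (cls u) s) t).
  rewrite !qact_cls, uactM; reflexivity.
Qed.

Definition BSigma : act S := @Act S _ qact qact1 qactM.

Definition embB (b : B) : BSigma := cls (inl b).
End BSigma.
End Acts.

Arguments is_morph {S C D} f.
Arguments closed_sub {S B} P.
Arguments sub_act {S B P} HP.
Arguments n_abs_pure {S} n A.
Arguments solves {S C D} iota {X} Sigma sol.
Arguments consistent {S C X} Sigma.
Arguments EqVV {S C X}. Arguments EqVC {S C X}.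
Arguments BSigma {S B X} Sigma.
Arguments embB {S B X} Sigma b.

(* Main.v *)
Require Import Defs.
From Stdlib Require Import List ClassicalEpsilon Classical FunctionalExtensionality PropExtensionality ProofIrrelevance.
Set Implicit Arguments.

Section Push.
Variables (S : monoid) (B A D : act S) (iota : B -> D) (theta : B -> A).
Hypotheses (Hi : is_morph iota) (Hinj : forall a b, iota a = iota b -> a = b)
  (Ht : is_morph theta).

Definition inimg (d : D) := exists b, iota b = d.
Definition Ecar := (A + {d : D | ~ inimg d})%type.
Definition fE (d : D) : Ecar :=
  match excluded_middle_informative (inimg d) with
  | left H => inl (theta (proj1_sig (constructive_indefinite_description _ H)))
  | right H => inr (exist _ d H)
  end.

Lemma fE_iota b : fE (iota b) = inl (theta b).
Proof. unfold fE; destruct (excluded_middle_informative _) as [H|H].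
  - destruct (constructive_indefinite_description _ H) as [b' Hb']; simpl.
    rewrite (Hinj Hb'). reflexivity.
  - exfalso; apply H; exists b; reflexivity. Qed.

Lemma fE_out d (H : ~ inimg d) : fE d = inr (exist _ d H).
Proof. unfold fE; destruct (excluded_middle_informative _) as [H'|H'].
  - contradiction.
  - f_equal; f_equal; apply proof_irrelevance. Qed.

Definition eact (e : Ecar) (s : S) : Ecar :=
  match e with inl a => inl (aact a s) | inr d => fE (aact (proj1_sig d) s) end.

Lemma eact_fE d s : eact (fE d) s = fE (aact d s).
Proof. destruct (classic (inimg d)) as [[b <-]|H].
  - rewrite fE_iota; simpl. rewrite <- Hi, fE_iota, Ht. reflexivity.
  - rewrite (fE_out H). reflexivity. Qed.

Lemma eact1 e : eact e (mone S) = e.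
Proof. destruct e as [a|[d H]]; simpl; rewrite aact1; [reflexivity| apply fE_out]. Qed.
Lemma eactM e s t : eact e (mmul S s t) = eact (eact e s) t.
Proof. destruct e as [a|[d H]]; simpl; rewrite aactM; [reflexivity| rewrite eact_fE; reflexivity]. Qed.

Definition Eact : act S := @Act S Ecar eact eact1 eactM.

Definition mapeq X (e : equation B X) : equation A X :=
  match e with EqVV x s y t => EqVV x s y t | EqVC x s c => EqVC x s (theta c) end.

Lemma consistent_map X (Sigma : list (equation B X)) sol :
  solves iota Sigma sol -> consistent (map (@mapeq X) Sigma).
Proof. intro Hs. exists Eact, (fun a => inl a). split; [intros a s; reflexivity|]. split.
  - intros a b H; injection H; auto.
  - exists (fun x => fE (sol x)). intros e He. apply in_map_iff in He.
    destruct He as [e0 [<- He0]]. specialize (Hs e0 He0). destruct e0 as [x s x0 s0|x s a]; simpl in *.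
    + change (eact (fE (sol x)) s = eact (fE (sol x0)) s0).
      rewrite !eact_fE, Hs. reflexivity.
    + change (eact (fE (sol x)) s = inl (theta a)).
      rewrite eact_fE, Hs, fE_iota. reflexivity.
Qed.
End Push.

Section Ext.
Variables (S : monoid) (B A : act S) (theta : B -> A) (Ht : is_morph theta)
  (X : Type) (Sigma : list (equation B X)) (solA : X -> A)
  (HsA : solves (fun a => a) (map (@mapeq S B A theta X) Sigma) solA).

Definition g (u : U B X) : A :=
  match u with inl b => theta b | inr (x, v) => aact (solA x) v end.

Lemma g_act u s : g (uact u s) = aact (g u) s.
Proof. destruct u as [b|[x v]]; simpl; [apply Ht| apply aactM]. Qed.

Lemma g_kappa p q : kappa Sigma p q -> g p = g q.
Proof. induction 1.
  - destruct H as [[x[u[y[v[Hin[-> ->]]]]]]|[x[s[c[Hin[-> ->]]]]]]; simpl.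
    + exact (HsA _ (in_map (@mapeq S B A theta X) _ _ Hin)).
    + exact (HsA _ (in_map (@mapeq S B A theta X) _ _ Hin)).
  - reflexivity.
  - auto.
  - congruence.
  - rewrite !g_act, IHkappa; reflexivity.
Qed.

Definition phi (q : BSigma Sigma) : A :=
  g (proj1_sig (constructive_indefinite_description _ (proj2_sig q))).

Lemma phi_cls u : phi (cls Sigma u) = g u.
Proof. unfold phi. destruct (constructive_indefinite_description _ _) as [u' Hu']; simpl.
  simpl in Hu'. symmetry; apply g_kappa. rewrite Hu'. apply krefl. Qed.

Lemma cls_surj (q : BSigma Sigma) : exists u, q = cls Sigma u.
Proof. destruct q as [P [u Hu]]; exists u.
  apply eq_sig_hprop; [intros; apply proof_irrelevance| exact Hu]. Qed.

Lemma phi_morph : is_morph phi.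
Proof. intros q s. destruct (cls_surj q) as [u ->].
  change (phi (qact (cls Sigma u) s) = aact (phi (cls Sigma u)) s).
  rewrite qact_cls, !phi_cls, g_act. reflexivity. Qed.
End Ext.

Theorem mainTheorem13 (S : monoid) (n : nat) (B : act S)
  (P : B -> Prop) (HP : closed_sub P)
  (Hpure : n_abs_pure n (sub_act HP))
  (theta : B -> sub_act HP) (Htheta : is_morph theta)
  (m : nat) (Sigma : list (equation B (var m)))
  (Hcons : consistent Sigma) (Hm : m <= n) :
  exists phi : BSigma Sigma -> sub_act HP,
    is_morph phi /\
    (forall b : B, phi (embB Sigma b) = theta b) /\
    ((forall a : sub_act HP, theta (proj1_sig a) = a) ->
       forall a : sub_act HP, phi (embB Sigma (proj1_sig a)) = a).
Proof.
  destruct Hcons as [D [iota [Hi [Hinj [sol Hs]]]]].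
  pose proof (consistent_map Hi Hinj Htheta Hs) as Hc.
  destruct (Hpure m Hm _ Hc) as [solA HsA].
  exists (@phi S B (sub_act HP) theta (var m) Sigma solA). split.
  { intros q s. apply (@phi_morph S B _ theta Htheta _ Sigma solA HsA). }
  assert (E : forall b, @phi S B (sub_act HP) theta (var m) Sigma solA (embB Sigma b) = theta b).
  { intro b. unfold embB. rewrite (@phi_cls S B _ theta Htheta _ Sigma solA HsA). reflexivity. }
  split; [exact E|]. intros Hr a. rewrite E. apply Hr.
Qed.
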